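(* Let $M$ be a matroid on $[n]$ and $\preceq$ a term order on $\mathbb{R}[x_1,\dots,x_n]$. Then $\mathcal{S}_\preceq(M)=\mathcal{S}_\preceq(M^* )$, where $M^*$ is the dual matroid.
   Context: The basis configuration of $M$ is $V_M=\{\mathbf{e}_B:B \text{ a basis of } M\}\subseteq\{0,1\}^n$ ($\mathbf{e}_B$ the characteristic vector of $B$). $\mathcal{S}_\preceq(M)=\{\tau\subseteq[n]:\prod_{i\in\tau}x_i\notin\mathrm{in}_\preceq(I(V_M))\}$, where $I(V_M)$ is the vanishing ideal of $V_M$ and $\mathrm{in}_\preceq$ denotes the initial ideal. $M^*$ has bases $\{[n]\setminus B: B \text{ a basis of } M\}$. *)

(* Defs.v *)
From mathcomp Require Import all_boot all_algebra.
From mathcomp Require Import reals.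
From mathcomp Require Import mpoly.

Set Implicit Arguments.
Unset Strict Implicit.
Unset Printing Implicit Defensive.

Import GRing.Theory.
Local Open Scope ring_scope.

Definition matroid_bases (n : nat) (BB : {set {set 'I_n}}) : Prop :=
  BB != set0 /\
  forall B1 B2, B1 \in BB -> B2 \in BB ->
    forall x, x \in B1 :\: B2 ->
      exists2 y, y \in B2 :\: B1 & (y |: (B1 :\ x)) \in BB.

Definition dual_bases (n : nat) (BB : {set {set 'I_n}}) : {set {set 'I_n}} :=
  [set ~: B | B in BB].

(* Monomials are exponent vectors 'X_{1..n}; le a b means x^a <= x^b. *)
Definition term_order (n : nat) (le : rel 'X_{1..n}) : Prop :=
  [/\ reflexive le, antisymmetric le, transitive le & total le] /\
  (forall a, le 0%MM a) /\
  (forall a b c, le a b -> le (a + c)%MM (b + c)%MM).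

Definition lead_monom (R : realType) (n : nat) (le : rel 'X_{1..n})
    (f : {mpoly R[n]}) (m : 'X_{1..n}) : Prop :=
  m \in msupp f /\ forall m', m' \in msupp f -> le m' m.

Definition ideal_gen (R : realType) (n : nat) (S : {mpoly R[n]} -> Prop)
    (g : {mpoly R[n]}) : Prop :=
  exists s : seq ({mpoly R[n]} * {mpoly R[n]}),
    (forall p, p \in s -> S p.2) /\ g = \sum_(p <- s) p.1 * p.2.

Definition vanishing_ideal (R : realType) (n : nat) (V : ('I_n -> R) -> Prop)
    (f : {mpoly R[n]}) : Prop :=
  forall v, V v -> f.@[v] = 0.

Definition initial_ideal (R : realType) (n : nat) (le : rel 'X_{1..n})
    (I : {mpoly R[n]} -> Prop) : {mpoly R[n]} -> Prop :=
  ideal_gen (fun g => exists f m, [/\ I f, f != 0, lead_monom le f m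
                                     & g = 'X_[m]]).

Definition char_vec (R : realType) (n : nat) (B : {set 'I_n}) : 'I_n -> R :=
  fun i => if i \in B then 1 else 0.

Definition basis_config (R : realType) (n : nat) (BB : {set {set 'I_n}})
    : ('I_n -> R) -> Prop :=
  fun v => exists2 B, B \in BB & v = @char_vec R n B.

Definition sqfree_monom (n : nat) (tau : {set 'I_n}) : 'X_{1..n} :=
  [multinom (i \in tau : nat) | i < n].

Definition S_set (R : realType) (n : nat) (le : rel 'X_{1..n})
    (BB : {set {set 'I_n}}) (tau : {set 'I_n}) : Prop :=
  ~ initial_ideal le (vanishing_ideal (@basis_config R n BB))
      ('X_[sqfree_monom tau] : {mpoly R[n]}).

(* Main.v *)
Require Import Defs.
From mathcomp Require Import all_boot all_algebra.
From mathcomp Require Import reals.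
From mathcomp Require Import mpoly.
Set Implicit Arguments.
Unset Strict Implicit.
Unset Printing Implicit Defensive.
Import GRing.Theory.
Local Open Scope ring_scope.

Definition wgt (R : realType) (n : nat) (m : 'X_{1..n}) (J : {set 'I_n}) : R :=
  \prod_i (if i \in J then - ((m i != 0%N)%:R) else 1).

Definition flipg (R : realType) (n : nat) (f : {mpoly R[n]}) : {mpoly R[n]} :=
  \sum_(m <- msupp f) \sum_(J : {set 'I_n})
     (f@_m * wgt R m J) *: 'X_[sqfree_monom J].

Lemma sqfreeE n (J : {set 'I_n}) i : sqfree_monom J i = (i \in J).
Proof. by rewrite /sqfree_monom mnmE. Qed.

Lemma eval_flip (R : realType) n (f : {mpoly R[n]}) (B : {set 'I_n}) :
  (flipg f).@[char_vec R B] = f.@[char_vec R (~: B)].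
Proof.
rewrite [RHS]mevalE /flipg (big_morph (meval _) (mevalD _) (meval0 _)).
apply: eq_bigr => m _.
rewrite (big_morph (meval _) (mevalD _) (meval0 _)).
under eq_bigr => J _ do rewrite mevalZ mevalX -mulrA.
rewrite -mulr_sumr; congr (_ * _).
transitivity (\sum_(J : {set 'I_n}) \prod_i (if i \in J then - ((m i != 0%N)%:R) * char_vec R B i else 1)).
  apply: eq_bigr => J _; rewrite /wgt -big_split /=.
  apply: eq_bigr => i _; rewrite sqfreeE.
  by case: (i \in J); rewrite ?expr1 ?expr0 ?mulr1.
rewrite -(@bigA_distr R 0 1 *%R +%R _ (fun i => - ((m i != 0%N)%:R) * char_vec R B i) (fun i => 1)).
apply: eq_bigr => i _; rewrite /char_vec in_setC.
  case: (i \in B) => /=; case: (m i) => [|k] //=; rewrite ?expr0 ?expr1n ?expr0n //=;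
  by rewrite ?oppr0 ?mulr0 ?mul0r ?mulr1 ?add0r ?mulN1r ?addNr.
Qed.

Lemma mcoeff_flip (R : realType) n (f : {mpoly R[n]}) t :
  (flipg f)@_t = \sum_(m <- msupp f) \sum_(J : {set 'I_n})
     (f@_m * wgt R m J) * (sqfree_monom J == t)%:R.
Proof.
rewrite /flipg (big_morph (mcoeff t) (mcoeffD t) (mcoeff0 _ t)).
apply: eq_bigr => m _.
rewrite (big_morph (mcoeff t) (mcoeffD t) (mcoeff0 _ t)).
by apply: eq_bigr => J _; rewrite mcoeffZ mcoeffX.
Qed.

Lemma wgt_supp (R : realType) n (m : 'X_{1..n}) J i :
  wgt R m J != 0 -> i \in J -> m i != 0%N.
Proof.
move=> nz iJ; apply/negP => /eqP mi0; move: nz.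
by rewrite /wgt (bigD1 i) //= iJ mi0 /= oppr0 mul0r eqxx.
Qed.

Lemma wgt_self (R : realType) n (J : {set 'I_n}) :
  wgt R (sqfree_monom J) J != 0.
Proof.
rewrite /wgt; apply/prodf_neq0 => i _; rewrite sqfreeE.
by case: (i \in J) => /=; rewrite ?oppr_eq0 oner_neq0.
Qed.

Lemma sqfree_inj n : injective (@sqfree_monom n).
Proof.
move=> J K /mnmP E; apply/setP => i; move: (E i); rewrite !sqfreeE.
by case: (i \in J); case: (i \in K).
Qed.

Lemma lem_le n (le : rel 'X_{1..n}) a b :
  term_order le -> (a <= b)%MM -> le a b.
Proof.
move=> [_ [H0 Htr]] ab; rewrite -(submK ab).
have := Htr 0%MM (b - a)%MM a (H0 _); by rewrite add0m.
Qed.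

Lemma sqfree_lem n (J : {set 'I_n}) (m : 'X_{1..n}) :
  (forall i, i \in J -> m i != 0%N) -> (sqfree_monom J <= m)%MM.
Proof.
move=> H; apply/forallP => i; rewrite sqfreeE.
by case iJ: (i \in J) => //=; rewrite lt0n H.
Qed.

Lemma flip_lead (R : realType) n (le : rel 'X_{1..n}) (f : {mpoly R[n]}) T :
  term_order le -> lead_monom le f (sqfree_monom T) ->
  lead_monom le (flipg f) (sqfree_monom T).
Proof.
move=> to [Hin Hmax].
have anti : antisymmetric le by case: to => [[]].
split.
- rewrite mcoeff_msupp mcoeff_flip (bigD1_seq (sqfree_monom T) Hin (msupp_uniq f)) /=.
  rewrite (bigD1 T) //= eqxx mulr1.
  rewrite big1 => [|J /negbTE JT]; last first.
    case: eqP => [/sqfree_inj E|_]; last by rewrite mulr0.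
    by rewrite E eqxx in JT.
  rewrite addr0 big1_seq ?addr0 => [|m /andP [mT mf]].
    by rewrite mulf_neq0 // ?wgt_self // -mcoeff_msupp.
  apply: big1 => J _; case: eqP => [e|_]; last by rewrite mulr0.
  rewrite mulr1; apply/eqP; rewrite mulf_eq0; apply/orP; right.
  apply/negPn/negP => nz; move: mT => /negP; apply.
  apply/eqP/anti; rewrite Hmax //=.
  by rewrite -e; apply: lem_le => //; apply: sqfree_lem => i; apply: wgt_supp nz.
- move=> m' Hm'; apply/negPn/negP => nle; move: Hm'.
  rewrite mcoeff_msupp mcoeff_flip big1_seq ?eqxx // => m /andP [_ mf].
  apply: big1 => J _; case: eqP => [e|_]; last by rewrite mulr0.
  rewrite mulr1; apply/eqP; rewrite mulf_eq0; apply/orP; right.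
  apply/negPn/negP => nz; move: nle => /negP; apply.
  have tr : transitive le by case: to => [[]].
  apply: (tr m); last exact: Hmax.
  by rewrite -e; apply: lem_le => //; apply: sqfree_lem => i; apply: wgt_supp nz.
Qed.

Lemma gen_divides (R : realType) n (p : {mpoly R[n]}) m t :
  (p * 'X_[m])@_t != 0 -> (m <= t)%MM.
Proof.
rewrite -mcoeff_msupp (perm_mem (msuppMX p m)) => /mapP [m' _ ->].
exact: lem_addr.
Qed.

Lemma key (R : realType) n (le : rel 'X_{1..n}) (BB1 BB2 : {set {set 'I_n}}) tau :
  term_order le -> (forall B, B \in BB2 -> ~: B \in BB1) ->
  initial_ideal le (vanishing_ideal (@basis_config R n BB1))
      ('X_[sqfree_monom tau] : {mpoly R[n]}) ->
  initial_ideal le (vanishing_ideal (@basis_config R n BB2))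
      ('X_[sqfree_monom tau] : {mpoly R[n]}).
Proof.
move=> to hB [s [HS E]].
have : ('X_[sqfree_monom tau] : {mpoly R[n]})@_(sqfree_monom tau) != 0.
  by rewrite mcoeffX eqxx oner_neq0.
rewrite E (big_morph (mcoeff _) (mcoeffD _) (mcoeff0 _ _)).
case: (boolP (has (fun p : {mpoly R[n]} * {mpoly R[n]} =>
          (p.1 * p.2)@_(sqfree_monom tau) != 0) s)) => [/hasP [p ps nz] _ | /hasPn H].
  have [f [m [If fnz lead E2]]] := HS p ps.
  move: nz; rewrite E2 => /gen_divides mle.
  set T := [set i | m i != 0%N].
  have mT : m = sqfree_monom T.
    apply/mnmP => i; rewrite sqfreeE inE.
    move/forallP: mle => /(_ i); rewrite sqfreeE.
    by case: (i \in tau); case: (m i) => [|[|k]].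
  rewrite mT in lead.
  have lg := flip_lead to lead.
  exists [:: ('X_[sqfree_monom tau - m]%MM, 'X_[m])]; split.
    move=> q; rewrite mem_seq1 => /eqP -> /=.
    exists (flipg f), m; split => //.
    - move=> v [B BB2B ->]; rewrite eval_flip; apply: If.
      by exists (~: B) => //; apply: hB.
    - apply/eqP => g0; move: lg => [+ _]; by rewrite g0 msupp0.
    - by rewrite mT.
  by rewrite big_seq1 /= -mpolyXD submK.
rewrite big1_seq ?eqxx // => q /andP [_ qs].
by move: (H q qs); rewrite negbK => /eqP.
Qed.

Theorem proposition2p6 (R : realType) (n : nat) (BB : {set {set 'I_n}})
    (le : rel 'X_{1..n}) :
  matroid_bases BB -> term_order le ->
  forall tau : {set 'I_n}, S_set R le BB tau <-> S_set R le (dual_bases BB) tau.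
Proof.
move=> _ to tau; rewrite /S_set; split => H1 H2; apply: H1; apply: (key to) H2.
- by move=> B BBB; apply: imset_f.
- by move=> B /imsetP [B' B'in ->]; rewrite setCK.
Qed.
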